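(* Let $\Omega$, $\mu$, $w$, $\alpha$ and $T_{\alpha,w,\infty}$ be as in the context, let $N\in\mathbb N$, and let $F\subseteq\Omega$ be a Borel set with $0<\mu(F)<\infty$ such that $$\inf\Big\{\prod_{k=1}^n(w\circ\alpha^{-k})(t):\ n\geq N,\ t\in F\Big\}\neq0.$$ Then the set $\{f\in L^\infty(\Omega,\mu):\ \|T^n_{\alpha,w,\infty}f\|_\infty\geq1\ \text{ for all } n\geq N\}$ is not $\sigma$-porous in $L^\infty(\Omega,\mu)$. In particular, the set of all non-hypercyclic vectors of the operator $T_{\alpha,w,\infty}$ is not $\sigma$-porous.
   Context: $\Omega$ is a locally compact Hausdorff space with a nonnegative Radon measure $\mu$; $w:\Omega\to(0,\infty)$ is a bounded measurable function; $\alpha:\Omega\to\Omega$ is a bijective bi-measurable map such that $\|f\circ\alpha\|_\infty=\|f\circ\alpha^{-1}\|_\infty=\|f\|_\infty$ for all $f\in L^\infty(\Omega,\mu)$. Here $\alpha^{-1}$ is the inverse map, $\alpha^{-k}:=(\alpha^{-1})^k$, $\alpha^k$ is the $k$-fold iterate. $T_{\alpha,w,\infty}:L^\infty(\Omega,\mu)\to L^\infty(\Omega,\mu)$ is $T_{\alpha,w,\infty}f:=w\cdot(f\circ\alpha)$. An operator $T$ on a Banach space $\mathcal X$ is hypercyclic if some $x\in\mathcal X$ (a hypercyclic vector) has dense orbit $\{T^nx:n\in\mathbb N_0\}$; non-hypercyclic vectors are those that are not hypercyclic vectors. Porosity: Let $X$ be a metric space and $0<\lambda<1$. A set $E\subseteq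 X$ is $\lambda$-porous at $x\in E$ if for each $\delta>0$ there is $y\in B(x;\delta)\setminus\{x\}$ with $B(y;\lambda\, d(x,y))\cap E=\varnothing$; $E$ is $\lambda$-porous if it is $\lambda$-porous at each of its points; $E$ is $\sigma$-$\lambda$-porous if it is a countable union of $\lambda$-porous subsets of $X$. A set is called $\sigma$-porous if it is $\sigma$-$\lambda$-porous for some $\lambda\in(0,1)$; ''not $\sigma$-porous'' means not $\sigma$-$\lambda$-porous for any $\lambda\in(0,1)$. *)

(* Defs.v *)
From HB Require Import structures.
From mathcomp Require Import all_boot all_order all_algebra.
From mathcomp Require Import all_classical all_reals all_analysis.
Set Implicit Arguments. Unset Strict Implicit. Unset Printing Implicit Defensive.
Import Order.TTheory GRing.Theory Num.Theory.
Import numFieldNormedType.Exports.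
Local Open Scope classical_set_scope.
Local Open Scope ring_scope.

Definition Borel (T : ptopologicalType) := g_sigma_algebraType (@open T).

Section Defs.
Context (R : realType) (T : ptopologicalType).
Variable mu : {measure set (Borel T) -> \bar R}.
Local Open Scope ereal_scope.

Definition radon_measure : Prop :=
  [/\ (forall K : set T, compact K -> mu K < +oo),
      (forall A : set (Borel T), measurable A ->
         mu A = ereal_inf [set mu U | U in [set U : set T | open U /\ A `<=` U]])
    & (forall U : set T, open U ->
         mu U = ereal_sup [set mu K | K in [set K : set T | compact K /\ K `<=` U]])].

Definition Linfnorm (f : Borel T -> R) : \bar R := 'N[mu]_(+oo)[EFin \o f].

(* f is a representative of an element of L^oo(Omega, mu) *)
Definition Linf (f : Borel T -> R) : Prop :=
  measurable_fun [set: Borel T] f /\ Linfnorm f < +oo.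

(* the L^oo distance (a pseudometric on representatives; d(f,g) = 0 iff
   f = g mu-a.e., i.e. iff f and g are the same element of L^oo) *)
Definition Ldist (f g : Borel T -> R) : \bar R := Linfnorm (f \- g)%R.

Definition lam_porous_at (lam : R) (E : set (Borel T -> R)) (x : Borel T -> R) :=
  forall delta : R, (0 < delta)%R ->
    exists y, [/\ Linf y, 0 < Ldist x y, Ldist x y < delta%:E &
      forall z, Linf z -> Ldist y z < lam%:E * Ldist x y -> ~ E z].

Definition lam_porous (lam : R) (E : set (Borel T -> R)) :=
  E `<=` Linf /\ forall x, E x -> lam_porous_at lam E x.

Definition sigma_lam_porous (lam : R) (E : set (Borel T -> R)) :=
  exists En : nat -> set (Borel T -> R),
    (forall n, lam_porous lam (En n)) /\ E = \bigcup_n En n.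

Definition sigma_porous (E : set (Borel T -> R)) :=
  exists lam : R, (0 < lam < 1)%R /\ sigma_lam_porous lam E.

Definition wcomp (alpha : Borel T -> Borel T) (w : Borel T -> R)
  (f : Borel T -> R) : Borel T -> R := fun t => (w t * f (alpha t))%R.

Definition hypercyclic_vector (Op : (Borel T -> R) -> (Borel T -> R))
  (f : Borel T -> R) :=
  Linf f /\ forall g, Linf g -> forall eps : R, (0 < eps)%R ->
    exists n : nat, Ldist (iter n Op f) g < eps%:E.

Definition non_hypercyclic_vectors (Op : (Borel T -> R) -> (Borel T -> R)) :=
  [set f | Linf f /\ ~ hypercyclic_vector Op f].

End Defs.

(* Main.v *)
Require Import Defs.
From HB Require Import structures.
From mathcomp Require Import all_boot all_order all_algebra.
From mathcomp Require Import all_classical all_reals all_analysis.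
From mathcomp Require Import ess_sup_inf hoelder measurable_realfun.
From mathcomp Require Import lra.
Import Order.TTheory GRing.Theory Num.Theory.
Import numFieldNormedType.Exports.
Set Implicit Arguments. Unset Strict Implicit.
Local Open Scope classical_set_scope.
Local Open Scope ring_scope.
Local Open Scope ereal_scope.

Lemma LinfnormE (R : realType) (T : ptopologicalType)
  (mu : {measure set (Borel T) -> \bar R}) (f : Borel T -> R) :
  0 < mu setT -> Linfnorm mu f = ess_sup mu (EFin \o (Num.norm \o f)).
Proof.
move=> mu0; rewrite /Linfnorm unlock /= mu0; congr ess_sup.
Qed.

Lemma LinfnormP (R : realType) (T : ptopologicalType)
  (mu : {measure set (Borel T) -> \bar R}) (f : Borel T -> R) (y : R) :
  0 < mu setT -> reflect (\forall x \ae mu, (`|f x| <= y)%R) (Linfnorm mu f <= y%:E).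
Proof.
move=> mu0; rewrite LinfnormE //.
apply: (iffP ess_supP) => H; apply: filterS H => x /=; by rewrite lee_fin.
Qed.

Lemma Linfnorm_lt (R : realType) (T : ptopologicalType)
  (mu : {measure set (Borel T) -> \bar R}) (f : Borel T -> R) (y : R) :
  0 < mu setT -> Linfnorm mu f < y%:E -> \forall x \ae mu, (`|f x| < y)%R.
Proof.
move=> mu0; rewrite LinfnormE // => H.
apply: filterS (ess_sup_ge mu (EFin \o (Num.norm \o f))) => x /= Hx.
by rewrite -lte_fin; apply: le_lt_trans H.
Qed.

Lemma Linfnorm_ge0 (R : realType) (T : ptopologicalType)
  (mu : {measure set (Borel T) -> \bar R}) (f : Borel T -> R) :
  0 <= Linfnorm mu f.
Proof. exact: Lnorm_ge0. Qed.

Lemma Ldist_tri (R : realType) (T : ptopologicalType)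
  (mu : {measure set (Borel T) -> \bar R}) (f g h : Borel T -> R) :
  0 < mu setT -> Ldist mu f h <= Ldist mu f g + Ldist mu g h.
Proof.
move=> mu0; rewrite /Ldist !LinfnormE //.
apply: le_trans (ess_supD _ _ _); apply: le_ess_sup; apply: nearW => x /=.
rewrite -EFinD lee_fin.
by rewrite (_ : (f x - h x = (f x - g x) + (g x - h x))%R) ?ler_normD // addrA subrK.
Qed.

Lemma Ldist_sym (R : realType) (T : ptopologicalType)
  (mu : {measure set (Borel T) -> \bar R}) (f g : Borel T -> R) :
  0 < mu setT -> Ldist mu f g = Ldist mu g f.
Proof.
move=> mu0; rewrite /Ldist !LinfnormE //; congr ess_sup; apply: funext => x /=.
by rewrite -opprB normrN.
Qed.
Local Open Scope ring_scope.
Lemma clamp_id (R : realType) (a u : R) : `|u| <= a -> Num.max (- a) (Num.min a u) = u.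
Proof.
rewrite ler_norml => /andP[h1 h2].
by rewrite (min_r h2) (max_r h1).
Qed.

Lemma clamp_le (R : realType) (a u : R) : 0 <= a -> `|Num.max (- a) (Num.min a u)| <= a.
Proof.
move=> a0; rewrite ler_norml; apply/andP; split.
  by rewrite le_max lexx.
rewrite ge_max; apply/andP; split; first by apply: (le_trans _ a0); rewrite oppr_le0.
by rewrite ge_min lexx.
Qed.

Local Open Scope ereal_scope.
Lemma Linfnorm_ae (R : realType) (T : ptopologicalType)
  (mu : {measure set (Borel T) -> \bar R}) (f g : Borel T -> R) :
  0 < mu setT -> (\forall x \ae mu, f x = g x) -> Linfnorm mu f = Linfnorm mu g.
Proof.
move=> mu0 H; rewrite !LinfnormE //; apply: eq_ess_sup; apply: filterS H => x /= ->.
by [].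
Qed.

Lemma clamp_Linf (R : realType) (T : ptopologicalType)
  (mu : {measure set (Borel T) -> \bar R}) (c y : Borel T -> R) (a : R) :
  0 < mu setT -> (0 <= a)%R -> Linf mu c -> Linf mu y -> Ldist mu c y <= a%:E ->
  exists y', [/\ Linf mu y', (forall t, `|c t - y' t| <= a)%R &
     forall z, Ldist mu y' z = Ldist mu y z].
Proof.
move=> mu0 a0 [mc _] [my yfin] /(LinfnormP _ _ mu0) H.
set y' := (c \- ((cst (- a)) \max ((cst a) \min (c \- y))))%R.
have ae : \forall x \ae mu, y' x = y x.
  apply: filterS H => x /= Hx; rewrite /y' /=.
  change (c x - Num.max (- a) (Num.min a (c x - y x)) = y x)%R; rewrite clamp_id //.
  by rewrite opprB addrC subrK.
exists y'; split.
- split; last by rewrite (Linfnorm_ae mu0 ae).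
  apply: measurable_funB => //; apply: measurable_maxr => //.
  by apply: measurable_minr => //; apply: measurable_funB.
- move=> t; rewrite /y' /=.
  change (`|c t - (c t - Num.max (- a) (Num.min a (c t - y t)))| <= a)%R.
  rewrite opprB addrC subrK; exact: clamp_le.
- move=> z; rewrite /Ldist; apply: Linfnorm_ae => //; apply: filterS ae => x /= ->.
  by [].
Qed.

Lemma porous_step (R : realType) (T : ptopologicalType)
  (mu : {measure set (Borel T) -> \bar R}) (lam : R) (E : set (Borel T -> R))
  (c : Borel T -> R) (r : R) :
  0 < mu setT -> (0 < lam)%R -> lam_porous mu lam E -> Linf mu c -> (0 < r)%R ->
  exists c' : Borel T -> R, exists r' : R, [/\ Linf mu c', (0 < r')%R, (r' <= r/4)%R,
     (forall t, `|c t - c' t| <= r/2)%R &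
     forall z, Linf mu z -> Ldist mu c' z < r'%:E -> ~ E z].
Proof.
move=> mu0 lam0 [EL Epor] Lc r0.
have r40 : (0 < r / 4)%R by apply: divr_gt0.
have [[x [Ex dx]]|nox] := pselect (exists x, E x /\ Ldist mu c x < (r/4)%:E).
- have [y [Ly dxy0 dxyd hole]] := Epor x Ex (r/4)%R r40.
  have dfin : Ldist mu x y \is a fin_num.
    by rewrite ge0_fin_numE ?(lt_trans dxyd) ?ltry // Linfnorm_ge0.
  set e := fine (Ldist mu x y).
  have de : Ldist mu x y = e%:E by rewrite fineK.
  have e0 : (0 < e)%R by rewrite -lte_fin -de.
  have dcy : Ldist mu c y <= (r/2)%:E.
    apply: le_trans (Ldist_tri c x y mu0) _.
    rewrite (_ : (r/2 = r/4 + r/4)%R); last by lra.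
    by rewrite EFinD; apply: leeD; apply: ltW.
  have [y' [Ly' cy' dy']] := clamp_Linf mu0 (ltW (divr_gt0 r0 (ltr0n _ 2))) Lc Ly dcy.
  exists y', (Num.min (lam*e) (r/4))%R; split => //.
  - by rewrite lt_min r40 andbT mulr_gt0.
  - by rewrite ge_min lexx orbT.
  - move=> z Lz; rewrite dy' => h; apply: (hole z Lz).
    apply: (lt_le_trans h); rewrite de -EFinM lee_fin ge_min lexx //.
- exists c, (r/4)%R; split => //.
  + by move=> t; rewrite subrr normr0 ltW // divr_gt0.
  + by move=> z Lz dz Ez; apply: nox; exists z.
Qed.

Lemma ball_not_sigma_porous (R : realType) (T : ptopologicalType)
  (mu : {measure set (Borel T) -> \bar R}) (S : set (Borel T -> R))
  (c0 : Borel T -> R) (r0 : R) :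
  0 < mu setT -> Linf mu c0 -> (0 < r0)%R ->
  (forall f, Linf mu f -> Ldist mu c0 f < r0%:E -> S f) -> ~ sigma_porous mu S.
Proof.
move=> mu0 Lc0 r00 ball0 [lam [/andP[l0 l1] [En [Epor SE]]]].
have stepE : forall kp : nat * ((Borel T -> R) * R), exists q : (Borel T -> R) * R,
    (Linf mu kp.2.1 /\ (0 < kp.2.2)%R) ->
    [/\ Linf mu q.1, (0 < q.2)%R, (q.2 <= kp.2.2/4)%R,
     (forall t, `|kp.2.1 t - q.1 t| <= kp.2.2/2)%R &
     forall z, Linf mu z -> Ldist mu q.1 z < q.2%:E -> ~ En kp.1 z].
  move=> [k [c r]] /=.
  have [[Lc r0']|no] := pselect (Linf mu c /\ (0 < r)%R); last first.
    by exists (c, r) => H; exfalso; apply: no.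
  have [c' [r' H]] := porous_step mu0 l0 (Epor k) Lc r0'.
  by exists (c', r').
have [g Hg] := choice stepE.
pose s := fix s n := if n is k.+1 then g (k, s k) else (c0, r0).
have sS : forall k, s k.+1 = g (k, s k) by [].
pose c n := (s n).1.
pose r n := (s n).2.
have Inv : forall n, Linf mu (c n) /\ (0 < r n)%R.
  elim=> [|n [IH1 IH2]]; first by split.
  by have [] := Hg (n, s n) (conj IH1 IH2).
have HA : forall n, (r n.+1 <= r n / 4)%R.
  by move=> n; have [] := Hg (n, s n) (Inv n).
have HB : forall n t, (`|c n t - c n.+1 t| <= r n / 2)%R.
  by move=> n; have [] := Hg (n, s n) (Inv n).
have HC : forall n z, Linf mu z -> Ldist mu (c n.+1) z < (r n.+1)%:E -> ~ En n z.
  by move=> n; have [] := Hg (n, s n) (Inv n).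
have rpos : forall n, (0 < r n)%R by move=> n; case: (Inv n).
have HD : forall m k t, (`|c k t - c (k + m)%N t| <= 2/3 * r k)%R.
  elim=> [|m IH] k t.
    rewrite addn0 subrr normr0; apply: mulr_ge0 => //; apply: ltW; exact: rpos.
  rewrite -addSnnS.
  apply: le_trans (ler_distD (c k.+1 t) _ _) _.
  have h1 := HB k t; have h2 := IH k.+1 t; have h3 := HA k.
  lra.
have HE : forall n, (r n * n.+1%:R <= r0)%R.
  elim=> [|n IH]; first by rewrite mulr1.
  have h3 := HA n; have h4 := rpos n.+1; have h5 := rpos n.
  have e1 : (n.+2%:R = n%:R + 2 :> R)%R by rewrite -addn2 natrD.
  have e2 : (n.+1%:R = n%:R + 1 :> R)%R by rewrite -addn1 natrD.
  rewrite e1; rewrite e2 in IH.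
  have h6 : (0 <= n%:R :> R)%R by [].
  nra.
have cauch : forall t, cvg (c ^~ t @ \oo).
  move=> t; apply/cauchy_cvgP; apply/cauchyP => e e0.
  have hK := truncnS_gt (r0 / e); set K := Num.Def.trunc (r0 / e) in hK.
  exists (c K t); exists K => // n /= Kn.
  rewrite /ball /=.
  have := HD (n - K)%N K t; rewrite subnKC //.
  have := HE K; have := rpos K.
  rewrite ltr_pdivrMr // in hK.
  have h7 : (0 <= K.+1%:R :> R)%R by [].
  move=> h8 h9 h10; nra.
pose gl t := lim (c ^~ t @ \oo).
have gb : forall k t, (`|c k t - gl t| <= 2/3 * r k)%R.
  move=> k t.
  apply: (@cvgr_to_le nat \oo _ R (fun n => `|c k t - c n t|)%R).
    apply: cvg_norm; apply: cvgB; [exact: cvg_cst | exact: cauch t].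
  exists k => // n /= kn; have := HD (n - k)%N k t; rewrite subnKC //.
have mgl : measurable_fun [set: Borel T] gl.
  apply: (measurable_fun_cvg (h := c)) => [m|x _]; first by case: (Inv m) => [[]].
  exact: cauch x.
have dist : forall k, Ldist mu (c k) gl < (r k)%:E.
  move=> k; apply: (@le_lt_trans _ _ (2/3 * r k)%:E); last first.
    by rewrite lte_fin; have := rpos k; lra.
  by apply/LinfnormP => //; apply: nearW => x; exact: gb.
have Lg : Linf mu gl.
  split => //.
  case: Lc0 => _ fin0.
  have f0 : Linfnorm mu c0 \is a fin_num by rewrite ge0_fin_numE // Linfnorm_ge0.
  have H0 : Linfnorm mu c0 <= (fine (Linfnorm mu c0))%:E by rewrite fineK.
  have /(LinfnormP _ _ mu0) H := H0.
  apply: (@le_lt_trans _ _ (fine (Linfnorm mu c0) + 2/3 * r0)%:E); last by rewrite ltry.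
  apply/LinfnormP => //; apply: filterS H => x /= Hx.
  have := gb 0%N x; rewrite /= => h.
  have e : gl x = (gl x - c0 x + c0 x)%R by rewrite subrK.
  have := ler_normD (gl x - c0 x)%R (c0 x); rewrite -e distrC.
  move: h Hx; rewrite /c /r /=; set F := fine _; set G := `|gl x|%R; set C := `|c0 x|%R; set D := `|c0 x - gl x|%R. lra.
have Sg : S gl by apply: ball0 => //; exact: dist 0%N.
move: Sg; rewrite SE => -[n _ Eng].
exact: (HC n gl Lg (dist n.+1)).
Qed.

Lemma ae_transfer (R : realType) (T : ptopologicalType)
  (mu : {measure set (Borel T) -> \bar R}) (beta : Borel T -> Borel T)
  (P : Borel T -> Prop) :
  0 < mu setT ->
  (forall f, Linf mu f -> Linfnorm mu (f \o beta) = Linfnorm mu f) ->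
  (\forall x \ae mu, P x) -> \forall x \ae mu, P (beta x).
Proof.
move=> mu0 Hb [N [mN muN sub]].
pose h : Borel T -> R := \1_N.
have aeN : \forall x \ae mu, (`|h x| <= 0)%R.
  exists N; split => // x /= Hx; apply: contrapT => Nx; apply: Hx.
  by rewrite /h indicE memNset // normr0.
have Lh : Linf mu h.
  split; first exact: measurable_indic.
  apply: (@le_lt_trans _ _ 0%:E); last exact: ltry.
  exact/(LinfnormP _ _ mu0).
have : Linfnorm mu (h \o beta) <= 0%:E by rewrite Hb //; exact/(LinfnormP _ _ mu0).
move=> /(LinfnormP _ _ mu0); apply: filterS => x /= hx.
apply: contrapT => nP; move: hx; rewrite /h indicE mem_set ?normr1 ?ler10 //.
by apply: sub.
Qed.

Lemma ae_transfer_iter (R : realType) (T : ptopologicalType)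
  (mu : {measure set (Borel T) -> \bar R}) (beta : Borel T -> Borel T) (n : nat)
  (P : Borel T -> Prop) :
  0 < mu setT ->
  (forall f, Linf mu f -> Linfnorm mu (f \o beta) = Linfnorm mu f) ->
  (\forall x \ae mu, P x) -> \forall x \ae mu, P (iter n beta x).
Proof.
move=> mu0 Hb; elim: n P => [//|n IH] P HP.
have := ae_transfer (P := fun x => P (iter n beta x)) mu0 Hb (IH P HP).
by apply: filterS => x; rewrite iterSr.
Qed.

Lemma iter_cancel (U : Type) (a b : U -> U) (n : nat) (t : U) :
  cancel a b -> iter n b (iter n a t) = t.
Proof.
move=> ab; elim: n t => [//|n IH] t.
by rewrite iterSr /= ab IH.
Qed.

Local Open Scope ring_scope.
Lemma iter_wcomp (R : realType) (T : ptopologicalType) (alpha : Borel T -> Borel T)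
  (w f : Borel T -> R) (n : nat) (t : Borel T) :
  iter n (wcomp alpha w) f t = (\prod_(0 <= k < n) w (iter k alpha t)) * f (iter n alpha t).
Proof.
elim: n t => [|n IH] t; first by rewrite big_geq // mul1r.
rewrite iterS /wcomp IH big_nat_recl // mulrA /=.
rewrite -iterSr -iterS; congr (_ * _ * _).
by apply: eq_bigr => k _; rewrite -iterSr -iterS.
Qed.

Lemma prod_inv (R : realType) (T : ptopologicalType) (alpha alpha_inv : Borel T -> Borel T)
  (w : Borel T -> R) (n : nat) (t : Borel T) :
  cancel alpha alpha_inv ->
  \prod_(1 <= k < n.+1) w (iter k alpha_inv (iter n alpha t)) =
  \prod_(0 <= k < n) w (iter k alpha t).
Proof.
move=> ai; elim: n t => [|n IH] t; first by rewrite !big_geq.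
rewrite [LHS]big_nat_recr // [RHS]big_nat_recl // iter_cancel //.
have -> : iter n.+1 alpha t = iter n alpha (alpha t) by rewrite iterSr.
rewrite IH mulrC; congr (_ * _).
by apply: eq_bigr => k _; rewrite iterSr.
Qed.

Lemma delta_bound (R : realType) (U : Type) (w : U -> R) (ai : U -> U)
  (N : nat) (F : set U) (M d : R) :
  (forall t, 0 < w t) -> (forall t, w t <= M) -> 0 < d ->
  (forall n t, (N <= n)%N -> F t -> d <= \prod_(1 <= k < n.+1) w (iter k ai t)) ->
  forall n t, F t -> d / (Num.max M 1) ^+ N <= \prod_(1 <= k < n.+1) w (iter k ai t).
Proof.
move=> wpos wM d0 Hd n t Ft.
set M' := Num.max M 1.
have M'1 : 1 <= M' by rewrite le_max lexx orbT.
have XN : 1 <= M' ^+ N by exact: exprn_ege1.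
have XN0 : 0 < M' ^+ N by apply: lt_le_trans XN.
have dd : d / M' ^+ N <= d by rewrite ler_pdivrMr // ler_peMr // ltW.
have [nN|Nn] := leqP N n; first by apply: le_trans dd (Hd n t nN Ft).
have h : d <= (\prod_(1 <= k < n.+1) w (iter k ai t)) * \prod_(n.+1 <= k < N.+1) w (iter k ai t).
  rewrite -big_cat_nat //; first exact: Hd.
  by rewrite ltnS ltnW.
have P0 : 0 < \prod_(1 <= k < n.+1) w (iter k ai t) by apply: prodr_gt0 => k _.
have Q : \prod_(n.+1 <= k < N.+1) w (iter k ai t) <= M' ^+ N.
  apply: (@le_trans _ _ (\prod_(n.+1 <= k < N.+1) M')).
    apply: ler_prod => k _; rewrite ltW //=; apply: le_trans (wM _) _.
    by rewrite le_max lexx.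
  by rewrite prodr_const_nat; apply: ler_weXn2l => //; rewrite subSS leq_subr.
rewrite ler_pdivrMr //; apply: le_trans h _.
by rewrite ler_pM2l.
Qed.


Unset Implicit Arguments.
Local Close Scope ereal_scope.
Local Open Scope classical_set_scope.
Local Open Scope ring_scope.

Theorem mainTheorem13 (R : realType) (T : ptopologicalType)
  (mu : {measure set (Borel T) -> \bar R})
  (w : Borel T -> R) (alpha alpha_inv : Borel T -> Borel T)
  (N : nat) (F : set (Borel T)) :
  hausdorff_space T -> locally_compact [set: T] -> radon_measure mu ->
  measurable_fun [set: Borel T] w ->
  (exists M : R, forall t, w t <= M) -> (forall t, 0 < w t) ->
  cancel alpha alpha_inv -> cancel alpha_inv alpha ->
  measurable_fun [set: Borel T] alpha ->
  measurable_fun [set: Borel T] alpha_inv ->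
  (forall f, Linf mu f ->
     Linfnorm mu (f \o alpha) = Linfnorm mu f /\
     Linfnorm mu (f \o alpha_inv) = Linfnorm mu f) ->
  (0 < N)%N ->
  measurable F -> (0 < mu F)%E -> (mu F < +oo)%E ->
  ereal_inf [set y : \bar R | exists (n : nat) (t : Borel T),
     [/\ (N <= n)%N, F t &
          y = ((\prod_(1 <= k < n.+1) w (iter k alpha_inv t))%:E)]]
    != 0%E ->
  ~ sigma_porous mu
      [set f | Linf mu f /\
         forall n : nat, (N <= n)%N ->
           (1 <= Linfnorm mu (iter n (wcomp alpha w) f))%E]
  /\ ~ sigma_porous mu (non_hypercyclic_vectors mu (wcomp alpha w)).
Proof.
move=> _ _ _ mw [M wM] wpos ai ia ma mai Hnorm N0 mF F0 Ffin Hinf.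
have mu0 : (0 < mu setT)%E.
  apply: lt_le_trans F0 _; apply: le_measure; rewrite ?inE //; exact: measurableT.
have Ha : forall f, Linf mu f -> Linfnorm mu (f \o alpha) = Linfnorm mu f.
  by move=> f /Hnorm [].
have Hai : forall f, Linf mu f -> Linfnorm mu (f \o alpha_inv) = Linfnorm mu f.
  by move=> f /Hnorm [].
set S := (X in ereal_inf X) in Hinf.
have [t0 Ft0] : exists t, F t.
  apply: contrapT => no.
  have F00 : F = set0 by apply/seteqP; split => x // Fx; apply: no; exists x.
  by move: F0; rewrite F00 measure0 ltxx.
have inf0 : (0 <= ereal_inf S)%E.
  apply/ereal_infP => y [n [t [_ _ ->]]]; rewrite lee_fin.
  by apply: prodr_ge0 => k _; apply: ltW.
have infS : S ((\prod_(1 <= k < N.+1) w (iter k alpha_inv t0))%:E).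
  by exists N, t0; split.
have inffin : ereal_inf S \is a fin_num.
  rewrite ge0_fin_numE //; apply: le_lt_trans (ereal_inf_lbound infS) _.
  exact: ltry.
set d := fine (ereal_inf S).
have d0 : 0 < d.
  apply: fine_gt0; rewrite lt0e Hinf inf0 /=; rewrite ge0_fin_numE // in inffin.
have Hd : forall n t, (N <= n)%N -> F t -> d <= \prod_(1 <= k < n.+1) w (iter k alpha_inv t).
  move=> n t nN Ft; rewrite -lee_fin /d fineK //.
  by apply: ereal_inf_lbound; exists n, t; split.
have Db := delta_bound wpos wM d0 Hd.
set dl := d / Num.max M 1 ^+ N in Db.
have dl0 : 0 < dl.
  apply: divr_gt0 => //; apply: exprn_gt0; apply: lt_le_trans ltr01 _.
  by rewrite le_max lexx orbT.
set K := 1 + dl^-1.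
have K0 : 0 < K by rewrite addr_gt0 // invr_gt0.
pose c : Borel T -> R := (cst K \* \1_F)%R.
have cF : forall t, F t -> c t = K by move=> t Ft; rewrite /c /= indicE mem_set // mulr1.
have cN : forall t, ~ F t -> c t = 0 by move=> t Ft; rewrite /c /= indicE memNset // mulr0.
have Lc : Linf mu c.
  split; first by apply: measurable_funM => //; exact: measurable_indic.
  apply: (@le_lt_trans _ _ K%:E); last exact: ltry.
  apply/(LinfnormP _ _ mu0); apply: nearW => t.
  have [Ft|Ft] := pselect (F t); first by rewrite cF // gtr0_norm.
  by rewrite cN // normr0 ltW.
have key : forall f, Linf mu f -> (Ldist mu c f < 1%:E)%E ->
    forall n, ~ (Linfnorm mu (iter n (wcomp alpha w) f) < 1%:E)%E.
  move=> f Lf dcf n lt1.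
  have A1 := Linfnorm_lt mu0 lt1.
  have A2 := Linfnorm_lt mu0 dcf.
  have A3 := ae_transfer_iter n mu0 Ha A2.
  have A4 : \forall t \ae mu, ~ F (iter n alpha t).
    apply: filterS2 A1 A3 => t h1 h3 Fs.
    move: h1 h3; rewrite iter_wcomp /= cF //.
    set s := iter n alpha t.
    have := Db n s Fs; rewrite /s prod_inv // => hP.
    set P := \prod_(0 <= k < n) w (iter k alpha t).
    set v := dl^-1.
    have hv : dl * v = 1 by rewrite /v divff // gt_eqF.
    set fs := f (iter n alpha t).
    move=> h1 h3.
    have h4 := ler_norm (P * fs).
    have h5 := ltr_normlW h3.
    rewrite /K in h5.
    have v0 : 0 < v by rewrite /v invr_gt0.
    suff : 1 <= `|P * fs| by rewrite leNgt h1.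
    have hP' : dl <= P := hP.
    have h5' : 1 + v - fs < 1 := h5.
    clear hP h5; nra.
  have A5 := ae_transfer_iter n mu0 Hai A4.
  have [Nn [mNn muNn sub]] : \forall t \ae mu, ~ F t.
    by apply: filterS A5 => t; rewrite iter_cancel.
  have : (mu F <= mu Nn)%E.
    apply: le_measure; rewrite ?inE //.
    by move=> x Fx; apply: sub => /= /(_ Fx).
  by rewrite muNn; move=> /(lt_le_trans F0); rewrite ltxx.
split.
- apply: (ball_not_sigma_porous mu0 Lc ltr01) => f Lf dcf; split => // n _.
  by rewrite leNgt; apply/negP; exact: key.
- apply: (ball_not_sigma_porous mu0 Lc ltr01) => f Lf dcf; split => // hyp.
  have L0 : Linf mu (cst 0 : Borel T -> R).
    split; first exact: measurable_cst.
    apply: (@le_lt_trans _ _ 0%:E); last exact: ltry.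
    by apply/(LinfnormP _ _ mu0); apply: nearW => t; rewrite normr0.
  have [n hn] := hyp.2 _ L0 1 ltr01.
  apply: (key f Lf dcf n).
  move: hn; rewrite /Ldist.
  suff -> : ((iter n (wcomp alpha w) f) \- cst 0 = iter n (wcomp alpha w) f)%R by [].
  by apply: funext => x /=; rewrite subr0.
Qed.
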